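(* Let $A$ be a sequence algebra and $X$ an algebraic (left) $A$-module such that for every $x\in X$, $\mathbf p^n\cdot x=0$ for all large $n$, and $\mathbf p^n\cdot x=0$ for all $n$ implies $x=0$. Suppose each $X_n:=\mathbf p^n\cdot X$ carries a norm $\|\cdot\|_n$. Let $M_X:=\{n:X_n\ne0\}$ and let $c_{00}^+(X)$ be the set of finitely supported nonnegative real sequences $\xi$ with $\xi_n=0$ for $n\notin M_X$. Let $f:c_{00}^+(X)\to\mathbb R$ satisfy: (i) $f(\xi)>0$ for $\xi\ne0$; (ii) $f(\lambda\xi)=\lambda f(\xi)$ for $\lambda>0$; (iii) $\xi\le\eta$ implies $f(\xi)\le f(\eta)$; (iv) $f(|a|\xi)\le\|a\|f(\xi)$ for $a\in A$, where $|a|\xi=(|a_n|\xi_n)_n$; (v) $f(\xi+\eta)\le f(\xi)+f(\eta)$. For $x\in X$ put $\|x\|:=f(\xi)$ with $\xi_n:=\|\mathbf p^n\cdot x\|_n$. Then $\|\cdot\|$ is a norm making $X$ a (contractive) normed homogeneous $A$-module. If in addition $f(\mathbf p^n)=1$ for all $n\in M_X$, then the restriction of $\|\cdot\|$ to each $X_n$ coincides with $\|\cdot\|_n$.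
   Context: A sequence algebra is a normed algebra of complex sequences with coordinatewise operations containing $c_{00}$ as a dense subalgebra, with $\|\mathbf p^n\|=1$, where $\mathbf p^n$ has $1$ in place $n$ and $0$ elsewhere; $f(0)$ is understood as $0$ (consistent with (ii)). A normed module is contractive if $\|a\cdot x\|\le\|a\|\|x\|$. A normed $A$-module is homogeneous if for $x,y$, $\|\mathbf p^n\cdot x\|\le\|\mathbf p^n\cdot y\|$ for all $n$ implies $\|x\|\le\|y\|$. *)

(* Defs.v *)
(* The complex field is modelled by an arbitrary
   C : numClosedFieldType; real-valued quantities (norms, f) are elements of C
   that are >= 0 (hence real). *)
From HB Require Import structures.
From mathcomp Require Import all_boot all_order all_algebra.
Set Implicit Arguments. Unset Strict Implicit. Unset Printing Implicit Defensive.
Import Order.TTheory GRing.Theory Num.Theory.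
Local Open Scope ring_scope.

Definition pseq (C : numClosedFieldType) (n : nat) : nat -> C :=
  fun k => if k == n then 1 else 0.

Definition finsupp (T : nmodType) (a : nat -> T) : Prop :=
  exists N : nat, forall k : nat, (N <= k)%N -> a k = 0.

Definition sequence_algebra (C : numClosedFieldType)
    (inA : (nat -> C) -> Prop) (nA : (nat -> C) -> C) : Prop :=
  (forall a, finsupp a -> inA a) /\
  (forall a b, inA a -> inA b -> inA (fun k => a k + b k)) /\
  (forall (l : C) a, inA a -> inA (fun k => l * a k)) /\
  (forall a b, inA a -> inA b -> inA (fun k => a k * b k)) /\
  (forall a, inA a -> 0 <= nA a) /\
  (forall a, inA a -> nA a = 0 -> forall k, a k = 0) /\
  (forall a b, inA a -> inA b -> nA (fun k => a k + b k) <= nA a + nA b) /\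
  (forall (l : C) a, inA a -> nA (fun k => l * a k) = `|l| * nA a) /\
  (forall a b, inA a -> inA b -> nA (fun k => a k * b k) <= nA a * nA b) /\
  (forall n, nA (pseq C n) = 1) /\
  (forall a, inA a -> forall e : C, 0 < e ->
     exists b, finsupp b /\ nA (fun k => a k - b k) < e).

Definition algebraic_module (C : numClosedFieldType) (X : lmodType C)
    (inA : (nat -> C) -> Prop) (act : (nat -> C) -> X -> X) : Prop :=
  (forall a b x, inA a -> inA b -> act (fun k => a k + b k) x = act a x + act b x) /\
  (forall a x y, inA a -> act a (x + y) = act a x + act a y) /\
  (forall a b x, inA a -> inA b -> act (fun k => a k * b k) x = act a (act b x)) /\
  (forall (l : C) a x, inA a -> act (fun k => l * a k) x = l *: act a x) /\
  (forall (l : C) a x, inA a -> act a (l *: x) = l *: act a x).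

Definition Xpart (C : numClosedFieldType) (X : lmodType C)
    (act : (nat -> C) -> X -> X) (n : nat) (x : X) : Prop :=
  exists y : X, x = act (pseq C n) y.

Definition norm_on (C : numClosedFieldType) (X : lmodType C)
    (P : X -> Prop) (N : X -> C) : Prop :=
  (forall x, P x -> 0 <= N x) /\
  (forall x, P x -> N x = 0 -> x = 0) /\
  (forall x y, P x -> P y -> N (x + y) <= N x + N y) /\
  (forall (l : C) x, P x -> N (l *: x) = `|l| * N x).

Definition MX (C : numClosedFieldType) (X : lmodType C)
    (act : (nat -> C) -> X -> X) (n : nat) : Prop :=
  exists x : X, act (pseq C n) x <> 0.

Definition c00plus (C : numClosedFieldType) (X : lmodType C)
    (act : (nat -> C) -> X -> X) (xi : nat -> C) : Prop :=
  (forall n, 0 <= xi n) /\ finsupp xi /\ (forall n, ~ MX act n -> xi n = 0).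

Definition normf (C : numClosedFieldType) (X : lmodType C)
    (act : (nat -> C) -> X -> X) (nX : nat -> X -> C)
    (f : (nat -> C) -> C) (x : X) : C :=
  f (fun n => nX n (act (pseq C n) x)).

(* Main.v *)
From Stdlib Require Import Classical FunctionalExtensionality.
Require Import Defs.
From HB Require Import structures.
From mathcomp Require Import all_boot all_order all_algebra.
Import Order.TTheory GRing.Theory Num.Theory.
Local Open Scope ring_scope.

Theorem proposition1p9 (C : numClosedFieldType)
    (inA : (nat -> C) -> Prop) (nA : (nat -> C) -> C)
    (X : lmodType C) (act : (nat -> C) -> X -> X)
    (nX : nat -> X -> C) (f : (nat -> C) -> C) :
  sequence_algebra inA nA ->
  algebraic_module inA act ->
  (forall x : X, exists N : nat, forall n, (N <= n)%N -> act (pseq C n) x = 0) ->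
  (forall x : X, (forall n, act (pseq C n) x = 0) -> x = 0) ->
  (forall n, norm_on (Xpart act n) (nX n)) ->
  (* (i) *)
  (forall xi, c00plus act xi -> (exists n, xi n <> 0) -> 0 < f xi) ->
  (* (ii) *)
  (forall xi (l : C), c00plus act xi -> 0 < l -> f (fun n => l * xi n) = l * f xi) ->
  (* (iii) *)
  (forall xi eta, c00plus act xi -> c00plus act eta ->
     (forall n, xi n <= eta n) -> f xi <= f eta) ->
  (* (iv) *)
  (forall a xi, inA a -> c00plus act xi ->
     f (fun n => `|a n| * xi n) <= nA a * f xi) ->
  (* (v) *)
  (forall xi eta, c00plus act xi -> c00plus act eta ->
     f (fun n => xi n + eta n) <= f xi + f eta) ->
  (* ||.|| is a norm on X *)
  ((forall x : X, 0 <= normf act nX f x) /\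
   (forall x : X, normf act nX f x = 0 -> x = 0) /\
   (forall x y : X, normf act nX f (x + y) <= normf act nX f x + normf act nX f y) /\
   (forall (l : C) (x : X), normf act nX f (l *: x) = `|l| * normf act nX f x) /\
   (* contractive *)
   (forall a (x : X), inA a -> normf act nX f (act a x) <= nA a * normf act nX f x) /\
   (* homogeneous *)
   (forall x y : X,
      (forall n, normf act nX f (act (pseq C n) x) <= normf act nX f (act (pseq C n) y)) ->
      normf act nX f x <= normf act nX f y)) /\
  ((forall n, MX act n -> f (pseq C n) = 1) ->
   forall n (x : X), Xpart act n x -> normf act nX f x = nX n x).
Proof.
move=> SA AM Hfin Hsep HN fi fii fiii fiv fv.
case: SA => Hc00 _.
case: AM => [AMadd [AMaddx [AMmul [AMscal AMscalx]]]].
have inP : forall n, inA (pseq C n).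
  move=> n; apply: Hc00; exists n.+1 => k hk; rewrite /pseq.
  by case: eqP => // e; move: hk; rewrite e ltnn.
have act0 : forall a, inA a -> act a 0 = 0.
  by move=> a ha; have := AMscalx 0 a 0 ha; rewrite !scale0r.
have actZ : forall x, act (fun _ => 0) x = 0.
  move=> x; have := AMscal 0 (pseq C 0) x (inP 0).
  rewrite scale0r => <-; congr act; apply: functional_extensionality => k.
  by rewrite mul0r.
have pp : forall n m x, act (pseq C n) (act (pseq C m) x) =
    if m == n then act (pseq C n) x else 0.
  move=> n m x; rewrite -AMmul //; case: eqP => [->|nm].
    congr act; apply: functional_extensionality => k; rewrite /pseq.
    by case: (k == n); rewrite ?mulr1 ?mulr0.
  rewrite -(actZ x); congr act; apply: functional_extensionality => k.
  rewrite /pseq; case: eqP => [->|]; last by rewrite mul0r.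
  by rewrite mul1r; case: eqP => // e; case: nm; rewrite e.
have XP : forall n x, Xpart act n (act (pseq C n) x) by move=> n x; exists x.
have nX0 : forall n, nX n 0 = 0.
  move=> n; have [_ [_ [_ hs]]] := HN n.
  have := hs 0 0; rewrite scale0r normr0 mul0r; apply.
  by exists 0; rewrite act0.
have notMX : forall n x, ~ MX act n -> act (pseq C n) x = 0.
  move=> n x h; case: (eqVneq (act (pseq C n) x) 0) => // hne.
  by case: h; exists x; apply/eqP.
have c00xi : forall x, c00plus act (fun n => nX n (act (pseq C n) x)).
  move=> x; split; first by move=> n; have [h _] := HN n; apply: h.
  split; last by move=> n h; rewrite notMX // nX0.
  by have [N hN] := Hfin x; exists N => k hk; rewrite hN // nX0.
have c00sc : forall xi l, c00plus act xi -> 0 <= l -> c00plus act (fun n => l * xi n).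
  move=> xi l [h1 [[N hN] h3]] hl; split; first by move=> n; apply: mulr_ge0.
  split; first by exists N => k hk; rewrite hN // mulr0.
  by move=> n h; rewrite h3 // mulr0.
have c00add : forall xi eta, c00plus act xi -> c00plus act eta ->
    c00plus act (fun n => xi n + eta n).
  move=> xi eta [h1 [[N hN] h3]] [g1 [[M hM] g3]]; split.
    by move=> n; apply: addr_ge0.
  split; last by move=> n h; rewrite h3 // g3 // addr0.
  exists (maxn N M) => k hk; rewrite hN ?hM ?addr0 //.
    by apply: leq_trans hk; apply: leq_maxr.
  by apply: leq_trans hk; apply: leq_maxl.
have f0 : forall xi, c00plus act xi -> (forall n, xi n = 0) -> f xi = 0.
  move=> xi hxi hz; have := fii xi 2 hxi (ltr0Sn _ 1).
  have -> : (fun n => 2 * xi n) = xi.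
    by apply: functional_extensionality => n; rewrite hz mulr0.
  rewrite mulr_natl mulr2n => h.
  by apply: (addrI (f xi)); rewrite addr0 -h.
have fge0 : forall xi, c00plus act xi -> 0 <= f xi.
  move=> xi hxi; case: (classic (exists n, xi n <> 0)) => h.
    by apply: ltW; apply: fi.
  rewrite f0 // => n; case: (eqVneq (xi n) 0) => // hn.
  by case: h; exists n; apply/eqP.
have fscale : forall xi l, c00plus act xi -> 0 <= l ->
    f (fun n => l * xi n) = l * f xi.
  move=> xi l hxi hl; case: (eqVneq l 0) => [->|hl0].
    rewrite mul0r f0 //; [exact: c00sc | by move=> n; rewrite mul0r].
  by apply: fii => //; rewrite lt_def hl0 hl.
have c00p : forall n, MX act n -> c00plus act (pseq C n).
  move=> n hn; split.
    by move=> k; rewrite /pseq; case: (k == n); rewrite ?ler01 ?lexx.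
  split; first by exists n.+1 => k hk; rewrite /pseq; case: eqP => // e;
    move: hk; rewrite e ltnn.
  by move=> k hk; rewrite /pseq; case: eqP => // e; case: hk; rewrite e.
have normf_pn : forall n x, normf act nX f (act (pseq C n) x) =
    nX n (act (pseq C n) x) * f (pseq C n).
  move=> n x; rewrite /normf.
  have -> : (fun m => nX m (act (pseq C m) (act (pseq C n) x))) =
            (fun m => nX n (act (pseq C n) x) * pseq C n m).
    apply: functional_extensionality => m; rewrite pp /pseq.
    case: (eqVneq n m) => [->|nm]; first by rewrite ?eqxx mulr1.
    by rewrite nX0 ?mulr0.
  case: (classic (MX act n)) => hM.
    apply: fscale; first by apply: c00p.
    by have [h _] := HN n; apply: h.
  rewrite notMX // nX0 mul0r f0 // => [|m]; last by rewrite mul0r.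
  split; first by move=> m; rewrite mul0r lexx.
  split; first by exists 0%N => k _; rewrite mul0r.
  by move=> m _; rewrite mul0r.
split; last first.
  move=> H1 n x [y ->]; rewrite normf_pn.
  case: (classic (MX act n)) => hM; first by rewrite H1 // mulr1.
  by rewrite notMX // nX0 mul0r.
split; first by move=> x; apply: fge0.
split.
  move=> x h; apply: Hsep => n.
  case: (eqVneq (act (pseq C n) x) 0) => // hne; exfalso.
  have : 0 < normf act nX f x.
    apply: fi; first by apply: c00xi.
    exists n => h0; apply: (negP hne); apply/eqP.
    by have [_ [h2 _]] := HN n; apply: h2.
  by rewrite h ltxx.
split.
  move=> x y; rewrite /normf; apply: le_trans; last by apply: fv.
  apply: fiii; [exact: c00xi| exact: c00add| ] => n.
  rewrite AMaddx //; have [_ [_ [h _]]] := HN n; apply: h; exact: XP.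
split.
  move=> l x; rewrite /normf.
  have -> : (fun n => nX n (act (pseq C n) (l *: x))) =
            (fun n => `|l| * nX n (act (pseq C n) x)).
    apply: functional_extensionality => n; rewrite AMscalx //.
    have [_ [_ [_ h]]] := HN n; apply: h; exact: XP.
  by apply: fscale.
split.
  move=> a x ha; rewrite /normf.
  have -> : (fun n => nX n (act (pseq C n) (act a x))) =
            (fun n => `|a n| * nX n (act (pseq C n) x)).
    apply: functional_extensionality => n; rewrite -AMmul //.
    have -> : (fun k => pseq C n k * a k) = (fun k => a n * pseq C n k).
      apply: functional_extensionality => k; rewrite /pseq.
      by case: eqP => [->|]; rewrite ?mulr1 ?mul1r ?mulr0 ?mul0r.
    rewrite AMscal //; have [_ [_ [_ h]]] := HN n; apply: h; exact: XP.
  by apply: fiv.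
move=> x y H; rewrite /normf; apply: fiii; try exact: c00xi.
move=> n; have := H n; rewrite !normf_pn.
case: (classic (MX act n)) => hM; last by rewrite !notMX // !nX0 lexx.
rewrite ler_pM2r //; apply: fi; first exact: c00p.
by exists n; rewrite /pseq eqxx; apply/eqP; rewrite oner_eq0.
Qed.
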